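(* Let $\mathsf p,\mathsf q$ be self-adjoint on $L^2(\mathbb R)$ with $\mathsf p\mathsf q-\mathsf q\mathsf p=(2\pi\mathsf i)^{-1}$, realized by $\langle x|\mathsf q=x\langle x|$, $\langle x|\mathsf p=\frac{1}{2\pi\mathsf i}\partial_x\langle x|$, and for $s\ge0$ let $|\alpha_s\rangle$ be given by $\langle x|\alpha_s\rangle=\frac{\varphi_b(s-x-c_b+\mathsf i0)}{\varphi_b(s+x+c_b-\mathsf i0)}e^{-2\pi\mathsf i(x+c_b)s}$. Then \[ \bigl(e^{2\pi b\mathsf p}+2\cosh(2\pi b\mathsf q)\bigr)|\alpha_s\rangle=2\cosh(2\pi bs)\,|\alpha_s\rangle . \]
   Context: $b\in\mathbb C$ with $\operatorname{Re}b>0$, $\operatorname{Im}b\ge0$, $c_b=\mathsf i(b+b^{-1})/2$. $\varphi_b$ is the non-compact quantum dilogarithm: $\varphi_b(z)=\exp(-\frac14\int_{\mathbb R}\frac{e^{-2\mathsf izx}dx}{\sinh(xb)\sinh(x/b)x})$ for $|\operatorname{Im}z|<\operatorname{Im}c_b$ (contour above $x=0$), extended meromorphically by $\varphi_b(z+\mathsf ib^{\pm1}/2)=(1+e^{2\pi zb^{\pm1}})\varphi_b(z-\mathsf ib^{\pm1}/2)$. *)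

(* Defs.v *)
From Stdlib Require Import Reals.
From Coquelicot Require Export Coquelicot.
Open Scope R_scope.

Definition cexp (z : C) : C := (exp (Re z) * cos (Im z), exp (Re z) * sin (Im z)).
Definition csinh (z : C) : C := ((cexp z - cexp (- z)) / 2)%C.
Definition ccosh (z : C) : C := ((cexp z + cexp (- z)) / 2)%C.

Definition c_b (b : C) : C := (Ci * (b + / b) / 2)%C.

(* height of the horizontal integration contour R + i*eps_b, which lies
   strictly between x = 0 and the nearest poles of 1/(sinh(xb) sinh(x/b))
   in the upper half plane (at i*pi/b and i*pi*b), i.e. "above x = 0". *)
Definition eps_b (b : C) : R := PI / 2 * Rmin (Re b) (Re (/ b)).

Definition phib_integrand (b z : C) (t : R) : C :=
  let x : C := (RtoC t + Ci * RtoC (eps_b b))%C in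
  (cexp (- (2 * Ci * z * x)) / (csinh (x * b) * csinh (x / b) * x))%C.

(* integral representation, valid for |Im z| < Im c_b *)
Definition phib_strip (b z : C) : C :=
  cexp (- (/ 4) * @RInt_gen C_R_CompleteNormedModule (phib_integrand b z)
                     (Rbar_locally m_infty) (Rbar_locally p_infty))%C.

(* meromorphic extension of phi_b to all of C via the functional equation
     phi_b(w + i b) = (1 + e^{2 pi b (w + i b / 2)}) phi_b(w).
   For arbitrary z choose the integer n with
     -Im c_b < Im (z + i n b) <= -Im c_b + Re b
   (this window lies inside the strip |Im w| < Im c_b) and transport. *)
Definition shift_index (b z : C) : Z :=
  Int_part (1 + (- Im (c_b b) - Im z) / Re b).

Definition fe_factor (b w : C) : C :=
  (1 + cexp (2 * RtoC PI * b * (w + Ci * b / 2)))%C.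

Fixpoint fe_prod (b z : C) (m : nat) : C :=
  match m with
  | O => 1%C
  | S m' => (fe_prod b z m' * fe_factor b (z + Ci * RtoC (INR m') * b))%C
  end.

Definition phib (b z : C) : C :=
  let n := shift_index b z in
  if Z.leb 0 n then
    (* phi(z + i n b) = fe_prod b z n * phi(z) *)
    (phib_strip b (z + Ci * IZR n * b) / fe_prod b z (Z.to_nat n))%C
  else
    (* phi(z) = fe_prod b (z + i n b) |n| * phi(z + i n b) *)
    (fe_prod b (z + Ci * IZR n * b) (Z.to_nat (- n)) * phib_strip b (z + Ci * IZR n * b))%C.

(* the eigenfunction <x|alpha_s>, as an analytic function of x in the lower
   half plane; on the real line its boundary value x - i0 is taken *)
Definition alpha (b : C) (s : R) (x : C) : C :=
  (phib b (RtoC s - x - c_b b) / phib b (RtoC s + x + c_b b)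
   * cexp (- (2 * RtoC PI * Ci * (x + c_b b) * RtoC s)))%C.

(* Main.v *)
Require Import Defs.
From Stdlib Require Import Reals Lra Lia ZArith.
From Coquelicot Require Import Coquelicot.
Open Scope R_scope.


Lemma Cinv0 : Cinv 0 = 0%C.
Proof. unfold Cinv; apply injective_projections; simpl; unfold Rdiv; ring. Qed.

Lemma Cinv_mult (a c : C) : Cinv (a * c) = (Cinv a * Cinv c)%C.
Proof.
  destruct (Ceq_dec a 0) as [->|Ha]. { rewrite Cmult_0_l, Cinv0; ring. }
  destruct (Ceq_dec c 0) as [->|Hc]. { rewrite Cmult_0_r, Cinv0; ring. }
  field. auto.
Qed.

Lemma Cinv_inv (a : C) : Cinv (Cinv a) = a.
Proof.
  destruct (Ceq_dec a 0) as [->|Ha]. { rewrite !Cinv0; auto. }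
  assert (Hi : Cinv a <> 0%C).
  { intro H. assert (E : (a * Cinv a)%C = 0%C) by (rewrite H; ring).
    rewrite Cinv_r in E by auto. injection E. lra. }
  field; repeat split; auto.
Qed.

Lemma cexp_add (a c : C) : cexp (a + c) = (cexp a * cexp c)%C.
Proof.
  unfold cexp. destruct a as [a1 a2], c as [c1 c2]. simpl.
  rewrite exp_plus, cos_plus, sin_plus.
  apply injective_projections; simpl; ring.
Qed.

Lemma cexp_0 : cexp 0 = 1%C.
Proof. unfold cexp; simpl. rewrite exp_0, cos_0, sin_0.
  apply injective_projections; simpl; ring. Qed.

Lemma cexp_opp_r (a : C) : (cexp a * cexp (- a) = 1)%C.
Proof. rewrite <- cexp_add. replace (a + - a)%C with (RtoC 0) by ring. apply cexp_0. Qed.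

Lemma cexp_iPI : cexp (Ci * RtoC PI) = (-1)%C.
Proof. unfold cexp; simpl. replace (0 * PI - 1 * 0) with 0 by ring.
  replace (0 * 0 + 1 * PI) with PI by ring. rewrite exp_0, cos_PI, sin_PI.
  apply injective_projections; simpl; ring. Qed.

Lemma cexp_miPI : cexp (- (Ci * RtoC PI)) = (-1)%C.
Proof. unfold cexp; simpl. replace (- (0 * PI - 1 * 0)) with 0 by ring.
  replace (- (0 * 0 + 1 * PI)) with (- PI) by ring. rewrite exp_0, cos_neg, sin_neg, cos_PI, sin_PI.
  apply injective_projections; simpl; ring. Qed.

Lemma up_minus1 (y : R) : up (y - 1) = (up y - 1)%Z.
Proof.
  symmetry. apply tech_up; rewrite minus_IZR; destruct (archimed y); simpl; lra.
Qed.

Lemma Int_part_minus1 (y : R) : Int_part (y - 1) = (Int_part y - 1)%Z.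
Proof. unfold Int_part. rewrite up_minus1. lia. Qed.

Lemma Int_part_le0 (y : R) : y < 1 -> (Int_part y <= 0)%Z.
Proof. intro H. unfold Int_part. destruct (archimed y) as [H1 H2].
  assert (IZR (up y) < 2) by lra. apply lt_IZR in H0. lia. Qed.

Lemma Int_part_le0_inv (y : R) : (Int_part y <= 0)%Z -> y < 1.
Proof. intro H. unfold Int_part in H. destruct (archimed y) as [H1 H2].
  assert (up y <= 1)%Z by lia. apply IZR_le in H0. lra. Qed.

Lemma Im_shift (b w : C) : Im (w + Ci * b)%C = Im w + Re b.
Proof. destruct w, b; simpl; ring. Qed.

Lemma shift_index_S (b w : C) : 0 < Re b ->
  shift_index b (w + Ci * b)%C = (shift_index b w - 1)%Z.
Proof.
  intro Hb. unfold shift_index. rewrite Im_shift.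
  rewrite <- Int_part_minus1. f_equal. field. lra.
Qed.

Lemma fe_prod_S (b w : C) (m : nat) :
  fe_prod b w (S m) = (fe_factor b w * fe_prod b (w + Ci * b) m)%C.
Proof.
  induction m.
  - simpl. replace (w + Ci * RtoC 0 * b)%C with w. ring.
    apply injective_projections; destruct w, b; simpl; ring.
  - change (fe_prod b w (S (S m))) with (fe_prod b w (S m) * fe_factor b (w + Ci * RtoC (INR (S m)) * b))%C.
    rewrite IHm. simpl fe_prod. rewrite <- !Cmult_assoc. f_equal. f_equal.
    f_equal. rewrite S_INR. apply injective_projections; destruct w, b; simpl; ring.
Qed.

Lemma phib_neg_form (b w : C) : (shift_index b w <= 0)%Z ->
  phib b w = (fe_prod b (w + Ci * IZR (shift_index b w) * b) (Z.to_nat (- shift_index b w))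
              * phib_strip b (w + Ci * IZR (shift_index b w) * b))%C.
Proof.
  intro Hn. unfold phib. set (n := shift_index b w) in *.
  destruct (Z.eq_dec n 0) as [E|E].
  - rewrite E. simpl. unfold Cdiv. 
    replace (Cinv 1) with (RtoC 1). ring.
    apply injective_projections; simpl; field.
  - replace (Z.leb 0 n) with false. reflexivity. symmetry. apply Z.leb_gt. lia.
Qed.

Lemma phib_shift_neg (b w : C) : 0 < Re b -> (shift_index b w <= 0)%Z ->
  phib b (w + Ci * b)%C = (fe_factor b w * phib b w)%C.
Proof.
  intros Hb Hn. rewrite (phib_neg_form b w Hn).
  rewrite phib_neg_form by (rewrite shift_index_S by auto; lia).
  rewrite shift_index_S by auto.
  set (n := shift_index b w) in *.
  replace (w + Ci * b + Ci * IZR (n - 1) * b)%C with (w + Ci * IZR n * b)%C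
    by (rewrite minus_IZR; apply injective_projections; destruct w, b; simpl; ring).
  replace (Z.to_nat (- (n - 1))) with (S (Z.to_nat (- n))) by lia.
  simpl fe_prod.
  replace (w + Ci * IZR n * b + Ci * INR (Z.to_nat (- n)) * b)%C with w.
  ring.
  rewrite INR_IZR_INZ, Z2Nat.id by lia. rewrite opp_IZR.
  apply injective_projections; destruct w, b; simpl; ring.
Qed.

Lemma phib_shift_inv (b w : C) : 0 < Re b ->
  ((shift_index b w <= 0)%Z -> fe_factor b w <> 0%C) ->
  Cinv (phib b w) = (fe_factor b w * Cinv (phib b (w + Ci * b)%C))%C.
Proof.
  intros Hb Hf. destruct (Z_le_gt_dec (shift_index b w) 0) as [Hn|Hn].
  - rewrite phib_shift_neg by auto. rewrite Cinv_mult. rewrite Cmult_assoc.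
    rewrite Cinv_r by auto. ring.
  - unfold phib. rewrite shift_index_S by auto.
    set (n := shift_index b w) in *.
    replace (Z.leb 0 n) with true by (symmetry; apply Z.leb_le; lia).
    replace (Z.leb 0 (n-1)) with true by (symmetry; apply Z.leb_le; lia).
    replace (w + Ci * b + Ci * IZR (n - 1) * b)%C with (w + Ci * IZR n * b)%C
      by (rewrite minus_IZR; apply injective_projections; destruct w, b; simpl; ring).
    replace (Z.to_nat n) with (S (Z.to_nat (n - 1))) by lia.
    rewrite fe_prod_S. unfold Cdiv. rewrite !Cinv_mult, !Cinv_inv. ring.
Qed.

Lemma no_zero (b1 b2 t eps : R) : 0 < b1 -> 0 < eps -> eps * (b1*b1 + b2*b2) < b1 ->
  exp (2*PI*(b1*t + b2*eps)) * cos (2*PI*(b2*t - b1*eps)) = 1 ->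
  exp (2*PI*(b1*t + b2*eps)) * sin (2*PI*(b2*t - b1*eps)) = 0 -> False.
Proof.
  intros H1 H2 H3 Hc Hs.
  set (R0 := 2*PI*(b1*t + b2*eps)) in *. set (th := 2*PI*(b2*t - b1*eps)) in *.
  assert (He : 0 < exp R0) by apply exp_pos.
  assert (Hsin : sin th = 0) by (apply (Rmult_eq_reg_l (exp R0)); [lra|lra]).
  assert (Hcos : cos th = 1).
  { pose proof (sin2_cos2 th) as S. unfold Rsqr in S. rewrite Hsin in S.
    assert (0 < cos th) by (destruct (Rlt_le_dec 0 (cos th)); auto; nra). nra. }
  rewrite Hcos in Hc. assert (R0 = 0). { apply exp_inv. rewrite exp_0. lra. }
  assert (Ht : b1 * t = - b2 * eps). { unfold R0 in H. pose proof PI_RGT_0. nra. }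
  assert (Hth : b1 * th = 2*PI*(-(eps * (b1*b1+b2*b2)))).
  { unfold th. replace (b1 * (2 * PI * (b2 * t - b1 * eps))) with (2*PI*(b2*(b1*t)) - 2*PI*b1*b1*eps) by ring.
    rewrite Ht. ring. }
  pose proof PI_RGT_0.
  assert (Hlo : - (2*PI) < th).
  { apply (Rmult_lt_reg_l b1); auto. rewrite Hth.
    assert (0 < PI * (b1 - eps*(b1*b1+b2*b2))) by (apply Rmult_lt_0_compat; lra). lra. }
  assert (Hhi : th < 0).
  { apply (Rmult_lt_reg_l b1); auto. rewrite Hth.
    assert (0 < eps * (b1*b1+b2*b2)).
    { apply Rmult_lt_0_compat; auto. pose proof (Rle_0_sqr b2). unfold Rsqr in *. nra. }
    assert (0 < PI * (eps*(b1*b1+b2*b2))) by (apply Rmult_lt_0_compat; lra). lra. }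
  assert (Hs2 : sin (- th) = 0) by (rewrite sin_neg, Hsin; ring).
  destruct (sin_eq_O_2PI_0 (- th)) as [E|[E|E]]; try lra.
  replace th with (- PI) in Hcos by lra. rewrite cos_neg, cos_PI in Hcos. lra.
Qed.

Lemma CiCi : (Ci * Ci = -1)%C.
Proof. apply injective_projections; simpl; ring. Qed.

Lemma alg (P P' Q Q' : C) : (P * P' = 1)%C -> (Q * Q' = 1)%C ->
  ((1 + P * Q' * (-1)) * (1 + P * Q * (-1)) * P' + (Q + Q') = P + P')%C.
Proof.
  intros H1 H2.
  replace ((1 + P * Q' * (-1)) * (1 + P * Q * (-1)) * P' + (Q + Q'))%C
    with (P' - (P*P')*Q' - (P*P')*Q + P*(P*P')*(Q*Q') + Q + Q')%C by ring.
  rewrite H1, H2. ring.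
Qed.

Theorem mainTheorem15 (b : C) (s x eps : R) :
  0 < Re b -> 0 <= Im b -> 0 <= s -> 0 < eps ->
  let z : C := (RtoC x - Ci * RtoC eps)%C in
  (alpha b s (z - Ci * b) + 2 * ccosh (2 * RtoC PI * b * z) * alpha b s z)%C
  = (2 * ccosh (2 * RtoC PI * b * RtoC s) * alpha b s z)%C.
Proof.
  intros Hb Hb2 Hs Heps z.
  assert (Hb0 : b <> 0%C). { intro E. rewrite E in Hb. simpl in Hb. lra. }
  destruct b as [b1 b2] eqn:Eb. simpl in Hb, Hb2. rewrite <- Eb in *.
  assert (HN : 0 < b1*b1 + b2*b2) by nra.
  assert (HImc : Im (c_b b) = (b1 + b1 / (b1*b1+b2*b2)) / 2).
  { rewrite Eb. unfold c_b. simpl. field. lra. }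
  set (c := c_b b) in *.
  set (u := (RtoC s - z - c)%C).
  set (w := (RtoC s + (z - Ci * b) + c)%C).
  assert (Hu : (shift_index b u <= 0)%Z).
  { assert (Im u = eps - Im c) by (unfold u, z; destruct c; simpl; ring).
    unfold shift_index. fold c. apply Int_part_le0. rewrite H.
    assert (Hre : Re b = b1) by (rewrite Eb; reflexivity). rewrite Hre.
    replace (1 + (- Im c - (eps - Im c)) / b1) with (1 - eps / b1) by (field; lra).
    assert (0 < eps / b1) by (unfold Rdiv; apply Rmult_lt_0_compat; [lra| apply Rinv_0_lt_compat; lra]). lra. }
  assert (Hre : Re b = b1) by (rewrite Eb; reflexivity).
  assert (Him : Im b = b2) by (rewrite Eb; reflexivity).
  set (B := (2 * RtoC PI * b * (RtoC s + z))%C).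
  assert (HreB : Re B = 2*PI*(b1*(s+x) + b2*eps)) by (unfold B, z; rewrite Eb; simpl; ring).
  assert (HimB : Im B = 2*PI*(b2*(s+x) - b1*eps)) by (unfold B, z; rewrite Eb; simpl; ring).
  assert (Hw : (shift_index b w <= 0)%Z -> fe_factor b w <> 0%C).
  { intros Hn Hf.
    assert (Hiw : Im w = - eps - b1 + Im c) by (unfold w, z; rewrite <- Hre; destruct c, b; simpl; ring).
    unfold shift_index in Hn. fold c in Hn. apply Int_part_le0_inv in Hn.
    rewrite Hiw, Hre, HImc in Hn.
    assert (Hlt : eps * (b1*b1+b2*b2) < b1).
    { assert (Hq : (- ((b1 + b1 / (b1 * b1 + b2 * b2)) / 2) - (- eps - b1 + (b1 + b1 / (b1 * b1 + b2 * b2)) / 2)) / b1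
          = (eps - b1 / (b1 * b1 + b2 * b2)) / b1) by (field; lra).
      rewrite Hq in Hn.
      assert (Hq2 : (eps - b1 / (b1 * b1 + b2 * b2)) / b1 < 0) by lra.
      assert (Hq3 : eps - b1 / (b1 * b1 + b2 * b2) < 0).
      { apply Rmult_lt_reg_r with (/ b1). apply Rinv_0_lt_compat; lra. rewrite Rmult_0_l. exact Hq2. }
      assert (Hq4 : eps < b1 / (b1*b1+b2*b2)) by lra.
      apply Rmult_lt_reg_r with (/ (b1*b1+b2*b2)). apply Rinv_0_lt_compat; lra.
      replace (eps * (b1 * b1 + b2 * b2) * / (b1 * b1 + b2 * b2)) with eps by (field; lra). exact Hq4. }
    unfold fe_factor in Hf.
    replace (2 * RtoC PI * b * (w + Ci * b / 2))%C with (B + Ci * RtoC PI)%C in Hf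
      by (unfold B, w, c, c_b; field; auto).
    rewrite cexp_add, cexp_iPI in Hf.
    assert (H1 : cexp B = 1%C).
    { replace (cexp B) with (cexp B + (1 + cexp B * -1))%C by (rewrite Hf; ring). ring. }
    unfold cexp in H1. rewrite HreB, HimB in H1. injection H1 as E1 E2.
    exact (no_zero b1 b2 (s+x) eps Hb Heps Hlt E1 E2). }
  unfold alpha. fold c.
  replace (RtoC s - (z - Ci * b) - c)%C with (u + Ci * b)%C by (unfold u; ring).
  replace (RtoC s + (z - Ci * b) + c)%C with w by reflexivity.
  replace (RtoC s + z + c)%C with (w + Ci * b)%C by (unfold w; ring).
  replace (RtoC s - z - c)%C with u by reflexivity.
  unfold Cdiv.
  rewrite (phib_shift_neg b u) by (rewrite ?Hre; auto).
  rewrite (phib_shift_inv b w) by (rewrite ?Hre; auto).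
  set (P := cexp (2 * RtoC PI * b * RtoC s)).
  set (P' := cexp (- (2 * RtoC PI * b * RtoC s))).
  set (Q := cexp (2 * RtoC PI * b * z)).
  set (Q' := cexp (- (2 * RtoC PI * b * z))).
  assert (HP : (P * P' = 1)%C) by apply cexp_opp_r.
  assert (HQ : (Q * Q' = 1)%C) by apply cexp_opp_r.
  assert (Ee : cexp (- (2 * RtoC PI * Ci * (z - Ci * b + c) * RtoC s))
     = (cexp (- (2 * RtoC PI * Ci * (z + c) * RtoC s)) * P')%C).
  { unfold P'. rewrite <- cexp_add. f_equal.
    replace (- (2 * RtoC PI * Ci * (z - Ci * b + c) * RtoC s))%C with
      (- (2 * RtoC PI * Ci * (z + c) * RtoC s) + 2 * RtoC PI * (Ci * Ci) * b * RtoC s)%C by ring.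
    rewrite CiCi. ring. }
  assert (Eu : fe_factor b u = (1 + P * Q' * -1)%C).
  { unfold fe_factor.
    replace (2 * RtoC PI * b * (u + Ci * b / 2))%C with
      (2 * RtoC PI * b * RtoC s + - (2 * RtoC PI * b * z) + - (Ci * RtoC PI))%C
      by (unfold u, c, c_b; field; auto).
    rewrite !cexp_add, cexp_miPI. reflexivity. }
  assert (Ew : fe_factor b w = (1 + P * Q * -1)%C).
  { unfold fe_factor.
    replace (2 * RtoC PI * b * (w + Ci * b / 2))%C with
      (2 * RtoC PI * b * RtoC s + (2 * RtoC PI * b * z) + (Ci * RtoC PI))%C
      by (unfold w, c, c_b; field; auto).
    rewrite !cexp_add, cexp_iPI. reflexivity. }
  rewrite Ee, Eu, Ew.
  assert (C1 : (2 * ccosh (2 * RtoC PI * b * z) = Q + Q')%C) by (unfold ccosh; fold Q Q'; field).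
  assert (C2 : (2 * ccosh (2 * RtoC PI * b * RtoC s) = P + P')%C) by (unfold ccosh; fold P P'; field).
  rewrite C1, C2.
  set (K := (phib b u * / phib b (w + Ci * b) * cexp (- (2 * RtoC PI * Ci * (z + c) * RtoC s)))%C).
  transitivity ((((1 + P * Q' * (-1)) * (1 + P * Q * (-1)) * P' + (Q + Q')) * K)%C).
  { unfold K. ring. }
  rewrite alg by auto. reflexivity.
Qed.
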